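(* Let $\varphi(x_1,\dots,x_n)=\bigwedge_{i=1}^m \mathit{cl}_i$ be a 3-CNF formula (each clause has exactly three distinct literals). Let $\mathcal{A}_\varphi$ be the one-player (all places owned by player 1) weighted recursive game graph with modules $A_0$, one module $A_y$ for each literal $y\in\{x_1,\neg x_1,\dots,x_n,\neg x_n\}$, and one module $A_{\mathit{cl}_i}$ per clause, each with a single entry and a single exit, defined as follows: $A_0$ (the initial module) invokes, in an infinite loop, boxes calling $A_{\mathit{cl}_1},A_{\mathit{cl}_2},\dots,A_{\mathit{cl}_m}$ in sequence, all transitions of weight $0$; in $A_{\mathit{cl}_i}$, for each literal $y$ of $\mathit{cl}_i$ there is a weight-$0$ transition from the entry to a box invoking $A_y$ and a weight-$0$ transition from that box's return to the exit; in $A_y$, the entry has exactly two outgoing transitions: a ''false'' transition directly to the exit with weight $-1$, and a ''true'' transition of weight $-1$ to a box invoking $A_{\neg y}$ (with $\neg\neg x=x$), whose return leads to the exit with weight $+2$. Then player 1 has a modular winning strategy in $\mathcal{A}_\varphi$ for the objective $\mathrm{LimInfAvg}\geq 0$ if and only if $\varphi$ is satisfiable.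
   Context: A weighted recursive game graph consists of modules, each with nodes, entry and exit nodes, boxes each invoking some module, and weighted transitions among nodes, calls (box, entry of invoked module) and returns (box, exit of invoked module); plays evolve over configurations consisting of a call stack of boxes and a current node, a call pushing the box and entering the invoked module, reaching an exit popping the box and continuing from the corresponding return. A modular strategy for player 1 assigns to each module a local strategy whose choice depends only on the sequence of nodes visited in the current invocation of that module (not on the calling context). A strategy is winning for $\mathrm{LimInfAvg}\geq 0$ if every consistent play $\pi$ has $\liminf_m w(\pi[1,m])/m\geq 0$, where $w$ is the sum of transition weights. *)

(* Defs.v *)
From mathcomp Require Import all_boot all_order all_algebra.
Set Implicit Arguments. Unset Strict Implicit. Unset Printing Implicit Defensive.
Import Order.TTheory GRing.Theory Num.Theory.

(* Places from which a transition can leave: a node, or a return (b, x)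
   (b a box, x an exit of the module invoked by b). *)
Inductive src (Node Box : Type) := SNode of Node | SRet of Box & Node.
(* Places a transition can reach: a node, or a call (b, e)
   (b a box, e an entry of the module invoked by b). *)
Inductive tgt (Node Box : Type) := TNode of Node | TCall of Box & Node.
Arguments SNode {Node Box}. Arguments SRet {Node Box}.
Arguments TNode {Node Box}. Arguments TCall {Node Box}.

Record wrgg := WRGG {
  Mod : Type;
  Node : Type;
  Box : Type;
  nmod : Node -> Mod;
  bmod : Box -> Mod;
  bcall : Box -> Mod;
  is_exit : Node -> bool;
  edge : src Node Box -> tgt Node Box -> int -> Prop;
  owner1 : src Node Box -> bool;
  init_node : Node
}.

Section Semantics.
Variable G : wrgg.
Notation Src := (src (Node G) (Box G)).
Notation Tgt := (tgt (Node G) (Box G)).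

(* A modular strategy of player 1: for each module a local strategy mapping
   the sequence of places visited in the current invocation (ending with the
   current place) to a choice of transition (target, weight). *)
Definition mstrategy := Mod G -> seq Src -> Tgt * int.

Definition legal (sigma : mstrategy) : Prop :=
  forall (M : Mod G) (h : seq Src) (s : Src),
    owner1 s -> (exists t w, edge s t w) ->
    edge s (sigma M (rcons h s)).1 (sigma M (rcons h s)).2.

(* Each stack
   frame additionally records the local history of the calling invocation
   (needed to evaluate modular strategies), and [hist] is the local history
   of the current invocation (places visited before the current node). *)
Record xconf := XConf {
  stk : seq (Box G * seq Src);
  hist : seq Src;
  cur : Node G }.

Definition init_conf : xconf := XConf [::] [::] (init_node G).

Definition cur_place (c : xconf) : Mod G * seq Src * Src * seq (Box G * seq Src) :=
  match is_exit (cur c), stk c with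
  | true, (b, hb) :: rest => (bmod b, hb, SRet b (cur c), rest)
  | _, _ => (nmod (cur c), hist c, SNode (cur c), stk c)
  end.

Definition step (sigma : mstrategy) (c : xconf) (t : Tgt) (w : int) (c' : xconf) : Prop :=
  let: (M, h, s, st) := cur_place c in
  let h' := rcons h s in
  [/\ edge s t w,
      (owner1 s -> sigma M h' = (t, w)) &
      c' = match t with
           | TNode v => XConf st h' v
           | TCall b e => XConf ((b, h') :: st) [::] e
           end].

Definition consistent_play (sigma : mstrategy) (c : nat -> xconf) (tw : nat -> Tgt * int) : Prop :=
  c 0%N = init_conf /\ forall i, step sigma (c i) (tw i).1 (tw i).2 (c i.+1).

Definition prefix_weight (tw : nat -> Tgt * int) (m : nat) : int :=
  (\sum_(i < m) (tw i).2)%R.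

(* liminf_m w(pi[1,m])/m >= 0, written out: for every eps > 0 the averages
   are eventually >= -eps. *)
Definition liminfavg_nonneg (tw : nat -> Tgt * int) : Prop :=
  forall eps : rat, (0 < eps)%R ->
    exists N : nat, forall m : nat, (N <= m)%N -> (0 < m)%N ->
      (- eps <= (prefix_weight tw m)%:~R / m%:R)%R.

Definition winning_modular (sigma : mstrategy) : Prop :=
  legal sigma /\
  forall c tw, consistent_play sigma c tw -> liminfavg_nonneg tw.

Definition has_modular_winning_strategy : Prop :=
  exists sigma : mstrategy, winning_modular sigma.

End Semantics.

(* literal over variables x_0..x_{n-1}: (i, true) = x_i, (i, false) = ~x_i *)
Definition lit (n : nat) := ('I_n * bool)%type.
Definition lneg (n : nat) (y : lit n) : lit n := (y.1, ~~ y.2).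
Definition clause (n : nat) := 3.-tuple (lit n).
Definition cnf3 (n : nat) := seq (clause n).

Definition lit_true (n : nat) (a : 'I_n -> bool) (y : lit n) : bool := a y.1 == y.2.

Definition satisfiable (n : nat) (phi : cnf3 n) : Prop :=
  exists a : 'I_n -> bool,
    forall cl, cl \in phi -> exists j : 'I_3, lit_true a (tnth cl j).

Inductive amod (n m : nat) := M0 | MLit of lit n | MCl of 'I_m.
Inductive anode (n m : nat) := En of amod n m | Ex of amod n m.
(* B0 i : box of A_0 invoking A_{cl_i};  BC i j : box of A_{cl_i} invoking
   A_y for y the j-th literal of cl_i;  BL y : box of A_y invoking A_{~y}. *)
Inductive abox (n m : nat) := B0 of 'I_m | BC of 'I_m & 'I_3 | BL of lit n.
Arguments M0 {n m}. Arguments MLit {n m}. Arguments MCl {n m}.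
Arguments En {n m}. Arguments Ex {n m}.
Arguments B0 {n m}. Arguments BC {n m}. Arguments BL {n m}.

Section Aphi.
Variables (n : nat) (phi : cnf3 n).
Let m := size phi.

Definition clause_lit (i : 'I_m) (j : 'I_3) : lit n := tnth (tnth (in_tuple phi) i) j.

Definition a_nmod (v : anode n m) : amod n m := match v with En M => M | Ex M => M end.
Definition a_bmod (b : abox n m) : amod n m :=
  match b with B0 _ => M0 | BC i _ => MCl i | BL y => MLit y end.
Definition a_bcall (b : abox n m) : amod n m :=
  match b with B0 i => MCl i | BC i j => MLit (clause_lit i j) | BL y => MLit (lneg y) end.
Definition a_is_exit (v : anode n m) : bool := if v is Ex _ then true else false.

Inductive a_edge : src (anode n m) (abox n m) -> tgt (anode n m) (abox n m) -> int -> Prop :=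
| e0_start (i : 'I_m) : nat_of_ord i = 0%N ->
    a_edge (SNode (En M0)) (TCall (B0 i) (En (MCl i))) 0
| e0_next (i j : 'I_m) : nat_of_ord j = ((nat_of_ord i).+1 %% m)%N ->
    a_edge (SRet (B0 i) (Ex (MCl i))) (TCall (B0 j) (En (MCl j))) 0
| ecl_call (i : 'I_m) (j : 'I_3) :
    a_edge (SNode (En (MCl i))) (TCall (BC i j) (En (MLit (clause_lit i j)))) 0
| ecl_ret (i : 'I_m) (j : 'I_3) :
    a_edge (SRet (BC i j) (Ex (MLit (clause_lit i j)))) (TNode (Ex (MCl i))) 0
| elit_false (y : lit n) :
    a_edge (SNode (En (MLit y))) (TNode (Ex (MLit y))) (- 1)%R
| elit_true (y : lit n) :
    a_edge (SNode (En (MLit y))) (TCall (BL y) (En (MLit (lneg y)))) (- 1)%R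
| elit_ret (y : lit n) :
    a_edge (SRet (BL y) (Ex (MLit (lneg y)))) (TNode (Ex (MLit y))) 2.

Definition A_phi : wrgg :=
  @WRGG (amod n m) (anode n m) (abox n m) a_nmod a_bmod a_bcall a_is_exit
        a_edge (fun _ => true) (En M0).

End Aphi.

(* Main.v *)
Require Import Defs.
From mathcomp Require Import all_boot all_order all_algebra.
From mathcomp Require Import zify ring lra.
Set Implicit Arguments. Unset Strict Implicit. Unset Printing Implicit Defensive.
Import Order.TTheory GRing.Theory Num.Theory.

Section Gen.
Variable G : wrgg.
Variable sigma : mstrategy G.

Definition nxt (c : xconf G) : xconf G * (tgt (Node G) (Box G) * int) :=
  let: (M, h, s, st) := cur_place c in
  let tw := sigma M (rcons h s) in
  (match tw.1 with
   | TNode v => XConf st (rcons h s) v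
   | TCall b e => XConf ((b, rcons h s) :: st) [::] e end, tw).

Definition place (c : xconf G) := (cur_place c).1.2.
Definition N1 c := (nxt c).1.
Definition pc k := iter k N1 (init_conf G).
Definition ptw k := (nxt (pc k)).2.
Definition okc c := exists t w, @edge G (place c) t w.

Lemma step_nxt c t w c' : (forall s, @owner1 G s) -> step sigma c t w c' ->
  (t, w) = (nxt c).2 /\ c' = N1 c.
Proof.
move=> own; rewrite /step /N1 /nxt; case: (cur_place c) => [[[M h] s] st].
case=> _ /(_ (own s)) -> ->. by [].
Qed.

Lemma nxt_step c : legal sigma -> (forall s, @owner1 G s) -> okc c ->
  step sigma c (nxt c).2.1 (nxt c).2.2 (N1 c).
Proof.
move=> leg own; rewrite /okc /place /step /N1 /nxt.
case: (cur_place c) => [[[M h] s] st] /= ok.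
split; first exact: leg.
  by case: (sigma M (rcons h s)).
by case: (sigma M (rcons h s)) => [[v|b e] w].
Qed.

Lemma play_unique c tw : (forall s, @owner1 G s) -> consistent_play sigma c tw ->
  forall k, c k = pc k /\ tw k = ptw k.
Proof.
move=> own [c0 st]; elim=> [|k [IHc IHt]].
  split=> //; have [E _] := step_nxt own (st 0%N); by rewrite /ptw /pc /= -c0 -E -surjective_pairing.
have [E1 E2] := step_nxt own (st k); rewrite IHc in E2.
have [E3 _] := step_nxt own (st k.+1); rewrite E2 in E3.
split; first by rewrite E2.
by rewrite /ptw -E3 -surjective_pairing.
Qed.

Lemma play_exists : legal sigma -> (forall s, @owner1 G s) ->
  (forall k, okc (pc k)) -> consistent_play sigma pc ptw.
Proof.
move=> leg own ok; split=> // k.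
have -> : pc k.+1 = N1 (pc k) by [].
exact: nxt_step.
Qed.

Lemma pc_S k : pc k.+1 = N1 (pc k). Proof. by []. Qed.
Lemma pw_S k : prefix_weight ptw k.+1 = (prefix_weight ptw k + (nxt (pc k)).2.2)%R.
Proof. by rewrite /prefix_weight big_ord_recr. Qed.

End Gen.
Local Open Scope ring_scope.

Lemma liminf_of_lb (G : wrgg) (tw : nat -> tgt (Node G) (Box G) * int) (C : nat) :
  (forall k, - (C%:Z) <= prefix_weight tw k) -> liminfavg_nonneg tw.
Proof.
move=> lb eps eps0.
have h0 : 0 <= (C%:R : rat) / eps by rewrite divr_ge0 // ltW.
exists (Num.Def.archi_bound ((C%:R : rat) / eps)) => k Nk k0.
have hb := archi_boundP h0.
have hk : (C%:R : rat) / eps < k%:R.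
  apply: (lt_le_trans hb); by rewrite ler_nat.
have k0' : (0 : rat) < k%:R by rewrite ltr0n.
rewrite ler_pdivlMr //.
have hC : (C%:R : rat) <= eps * k%:R.
  rewrite mulrC -ler_pdivrMr //; exact: ltW.
have := lb k; rewrite -(ler_int rat) => /=.
rewrite rmorphN /= => hw.
have : (- (C%:Z)%:~R : rat) = - C%:R by rewrite -pmulrn.
lra.
Qed.

Lemma not_liminf (G : wrgg) (tw : nat -> tgt (Node G) (Box G) * int) (L C : nat) : (0 < L)%N ->
  (forall k, prefix_weight tw k * L%:Z <= C%:Z - k%:Z) -> ~ liminfavg_nonneg tw.
Proof.
move=> L0 ub lim.
have e0 : (0 : rat) < (2 * L)%:R^-1 by rewrite invr_gt0 ltr0n; lia.
have [N hN] := lim _ e0.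
set k := (N + 2 * C + 1)%N.
have := hN k ltac:(lia) ltac:(lia).
have := ub k.
set W := prefix_weight tw k.
move=> hu hl.
have k0 : (0 : rat) < k%:R by rewrite ltr0n; lia.
have L0' : (0 : rat) < L%:R by rewrite ltr0n.
rewrite ler_pdivlMr // in hl.
have hu' : (W%:~R : rat) * L%:R <= C%:R - k%:R.
  have := hu; rewrite -(ler_int rat) rmorphM rmorphB /=.
  by rewrite !pmulrn.
have e : (2 * L)%:R^-1 * (2 * L%:R) = (1 : rat).
  by rewrite -[2 * _]natrM mulVf // pnatr_eq0; lia.
have hkC : (k%:R : rat) >= 2 * C%:R + 1.
  have -> : (2 * C%:R + 1 : rat) = (2 * C + 1)%:R by rewrite natrD natrM.
  rewrite ler_nat; lia.
move: hl hu' e hkC k0 L0'.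
set x := (2 * L)%:R^-1.
move=> hl hu' e hkC k0 L0'.
nra.
Qed.

Section Phi.
Variables (n : nat) (phi : cnf3 n).
Local Notation mm := (size phi).
Local Notation G := (A_phi phi).
Local Notation SRC := (src (anode n mm) (abox n mm)).

Lemma lnegK (y : lit n) : lneg (lneg y) = y.
Proof. by case: y => a b; rewrite /lneg /= negbK. Qed.

Definition nextcl (i : 'I_mm) : 'I_mm :=
  Ordinal (ltn_pmod i.+1 (leq_ltn_trans (leq0n i) (ltn_ord i))).

Variable sigma : mstrategy G.
Hypothesis leg : legal sigma.

Lemma edgeE s t w : @edge G s t w = a_edge s t w. Proof. by []. Qed.

Lemma leg' (M : amod n mm) (h : seq SRC) (s : SRC) t w : a_edge s t w ->
  a_edge s (sigma M (rcons h s)).1 (sigma M (rcons h s)).2.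
Proof. move=> e; apply: (leg M h (s := s)) => //; by exists t, w. Qed.

Definition jof (i : 'I_mm) : 'I_3 :=
  match (sigma (MCl i) [:: SNode (En (MCl i))]).1 with
  | TCall (BC _ j) _ => j | _ => ord0 end.

Lemma sig_cl i : sigma (MCl i) [:: SNode (En (MCl i))] =
  (TCall (BC i (jof i)) (En (MLit (clause_lit i (jof i)))), 0%R).
Proof.
have := leg' (MCl i) [::] (ecl_call i ord0); rewrite /jof /=.
case: (sigma _ _) => t w /= H; inversion H; subst; by [].
Qed.

Definition ch (z : lit n) : bool :=
  if (sigma (MLit z) [:: SNode (En (MLit z))]).1 is TCall _ _ then true else false.

Lemma sig_lit z : sigma (MLit z) [:: SNode (En (MLit z))] =
  if ch z then (TCall (BL z) (En (MLit (lneg z))), (-1)%R) else (TNode (Ex (MLit z)), (-1)%R).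
Proof.
have := leg' (MLit z) [::] (@elit_false n phi z); rewrite /ch /=.
case: (sigma _ _) => t w /= H; inversion H; subst; by [].
Qed.

Lemma sig_retL z h : sigma (MLit z) (rcons h (SRet (BL z) (Ex (MLit (lneg z))))) =
  (TNode (Ex (MLit z)), 2%R).
Proof.
have := leg' (MLit z) h (@elit_ret n phi z).
case: (sigma _ _) => t w /= H; inversion H; subst; by [].
Qed.

Lemma sig_retC i j h : sigma (MCl i) (rcons h (SRet (BC i j) (Ex (MLit (clause_lit i j))))) =
  (TNode (Ex (MCl i)), 0%R).
Proof.
have := leg' (MCl i) h (ecl_ret i j).
case: (sigma _ _) => t w /= H; inversion H; subst; by [].
Qed.

Lemma sig_ret0 i h : sigma M0 (rcons h (SRet (B0 i) (Ex (MCl i)))) =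
  (TCall (B0 (nextcl i)) (En (MCl (nextcl i))), 0%R).
Proof.
have := leg' M0 h (@e0_next n phi i (nextcl i) erefl).
case: (sigma _ _) => t w /= H; inversion H; subst.
by have -> : j = nextcl i by apply: val_inj.
Qed.

Lemma sig_init (i0 : 'I_mm) : nat_of_ord i0 = 0%N -> sigma M0 [:: SNode (En M0)] =
  (TCall (B0 i0) (En (MCl i0)), 0%R).
Proof.
move=> i00; have := leg' M0 [::] (e0_start i00).
case: (sigma _ _) => t w /= H; inversion H; subst.
by have -> : i = i0 by apply: val_inj; rewrite /= i00; assumption.
Qed.


Local Notation XC := (@XConf G).

Lemma nx_C0 i st : nxt sigma (XC st [::] (En (MCl i))) =
  (XC ((BC i (jof i), [:: SNode (En (MCl i))]) :: st) [::] (En (MLit (clause_lit i (jof i)))),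
   (TCall (BC i (jof i)) (En (MLit (clause_lit i (jof i)))), 0%R)).
Proof. by rewrite /nxt /= sig_cl. Qed.

Lemma nx_litF z st : ch z = false -> nxt sigma (XC st [::] (En (MLit z))) =
  (XC st [:: SNode (En (MLit z))] (Ex (MLit z)), (TNode (Ex (MLit z)), (-1)%R)).
Proof. by move=> cz; rewrite /nxt /= sig_lit cz. Qed.

Lemma nx_litT z st : ch z = true -> nxt sigma (XC st [::] (En (MLit z))) =
  (XC ((BL z, [:: SNode (En (MLit z))]) :: st) [::] (En (MLit (lneg z))),
   (TCall (BL z) (En (MLit (lneg z))), (-1)%R)).
Proof. by move=> cz; rewrite /nxt /= sig_lit cz. Qed.

Lemma nx_retL z hz st h : nxt sigma (XC ((BL z, hz) :: st) h (Ex (MLit (lneg z)))) =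
  (XC st (rcons hz (SRet (BL z) (Ex (MLit (lneg z))))) (Ex (MLit z)), (TNode (Ex (MLit z)), 2%R)).
Proof. by rewrite /nxt /= sig_retL. Qed.

Lemma nx_retC i j h1 st h : nxt sigma (XC ((BC i j, h1) :: st) h (Ex (MLit (clause_lit i j)))) =
  (XC st (rcons h1 (SRet (BC i j) (Ex (MLit (clause_lit i j))))) (Ex (MCl i)),
   (TNode (Ex (MCl i)), 0%R)).
Proof. by rewrite /nxt /= sig_retC. Qed.

Lemma nx_ret0 i h0 st h : nxt sigma (XC ((B0 i, h0) :: st) h (Ex (MCl i))) =
  (XC ((B0 (nextcl i), rcons h0 (SRet (B0 i) (Ex (MCl i)))) :: st) [::] (En (MCl (nextcl i))),
   (TCall (B0 (nextcl i)) (En (MCl (nextcl i))), 0%R)).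
Proof. by rewrite /nxt /= sig_ret0. Qed.

Lemma nx_init (i0 : 'I_mm) : nat_of_ord i0 = 0%N -> nxt sigma (init_conf G) =
  (XC [:: (B0 i0, [:: SNode (En M0)])] [::] (En (MCl i0)), (TCall (B0 i0) (En (MCl i0)), 0%R)).
Proof. by move=> h; rewrite /nxt /= (sig_init h). Qed.

Lemma ok_C0 i st h : okc (XC st h (En (MCl i))).
Proof. by exists (TCall (BC i ord0) (En (MLit (clause_lit i ord0)))), 0%R; apply: ecl_call. Qed.
Lemma ok_lit z st h : okc (XC st h (En (MLit z))).
Proof. by exists (TNode (Ex (MLit z))), (-1)%R; apply: elit_false. Qed.
Lemma ok_retL z hz st h : okc (XC ((BL z, hz) :: st) h (Ex (MLit (lneg z)))).
Proof. by exists (TNode (Ex (MLit z))), 2%R; apply: elit_ret. Qed.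
Lemma ok_retC i j h1 st h : okc (XC ((BC i j, h1) :: st) h (Ex (MLit (clause_lit i j)))).
Proof. by exists (TNode (Ex (MCl i))), 0%R; apply: ecl_ret. Qed.
Lemma ok_ret0 i h0 st h : okc (XC ((B0 i, h0) :: st) h (Ex (MCl i))).
Proof. by exists (TCall (B0 (nextcl i)) (En (MCl (nextcl i)))), 0%R; apply: e0_next. Qed.
Lemma ok_init (i0 : 'I_mm) : nat_of_ord i0 = 0%N -> okc (init_conf G).
Proof. by move=> h; exists (TCall (B0 i0) (En (MCl i0))), 0%R; apply: e0_start. Qed.


Local Notation pw k := (prefix_weight (ptw sigma) k).
Local Notation C0 i h := (XC [:: (B0 i, h)] [::] (En (MCl i))).

Lemma adv k c c' t w : pc sigma k = c -> nxt sigma c = (c', (t, w)) ->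
  pc sigma k.+1 = c' /\ pw k.+1 = (pw k + w)%R.
Proof. by move=> e1 e2; rewrite pc_S pw_S /N1 e1 e2. Qed.

Definition good i := ch (clause_lit i (jof i)) && ~~ ch (lneg (clause_lit i (jof i))).
Definition neg1 i := ~~ ch (clause_lit i (jof i)).
Definition div i := ch (clause_lit i (jof i)) && ch (lneg (clause_lit i (jof i))).

Lemma good_run k i h0 : pc sigma k = C0 i h0 -> good i ->
  [/\ exists h0', pc sigma (k + 6) = C0 (nextcl i) h0',
     pw (k + 6) = pw k,
     (forall l, (l <= 6)%N -> (pw k - 2 <= pw (k + l) <= pw k)%R) &
     (forall l, (l < 6)%N -> okc (pc sigma (k + l)))].
Proof.
rewrite /good => e0 /andP[cy cny]; move/negbTE: cny => cny.
set y := clause_lit i (jof i).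
have [e1 w1] := adv e0 (nx_C0 i _).
have [e2 w2] := adv e1 (nx_litT _ cy).
have [e3 w3] := adv e2 (nx_litF _ cny).
have [e4 w4] := adv e3 (nx_retL _ _ _ _).
have [e5 w5] := adv e4 (nx_retC _ _ _ _ _).
have [e6 w6] := adv e5 (nx_ret0 _ _ _ _).
rewrite !addnS addn0; split.
- by eexists; exact: e6.
- by rewrite w6 w5 w4 w3 w2 w1; ring.
- case=> [|[|[|[|[|[|[|l]]]]]]] // _; rewrite ?addnS addn0 ?w6 ?w5 ?w4 ?w3 ?w2 ?w1; 
  apply/andP; split; lra.
- case=> [|[|[|[|[|[|l]]]]]] // _; rewrite ?addnS addn0 ?e5 ?e4 ?e3 ?e2 ?e1 ?e0.
  + exact: ok_C0.
  + exact: ok_lit.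
  + exact: ok_lit.
  + exact: ok_retL.
  + exact: ok_retC.
  + exact: ok_ret0.
Qed.


Lemma neg1_run k i h0 : pc sigma k = C0 i h0 -> neg1 i ->
  [/\ exists h0', pc sigma (k + 4) = C0 (nextcl i) h0',
     pw (k + 4) = (pw k - 1)%R,
     (forall l, (l <= 4)%N -> (pw (k + l) <= pw k)%R) &
     (forall l, (l < 4)%N -> okc (pc sigma (k + l)))].
Proof.
rewrite /neg1 => e0 /negbTE cy.
set y := clause_lit i (jof i).
have [e1 w1] := adv e0 (nx_C0 i _).
have [e2 w2] := adv e1 (nx_litF _ cy).
have [e3 w3] := adv e2 (nx_retC _ _ _ _ _).
have [e4 w4] := adv e3 (nx_ret0 _ _ _ _).
rewrite !addnS addn0; split.
- by eexists; exact: e4.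
- by rewrite w4 w3 w2 w1; ring.
- case=> [|[|[|[|[|l]]]]] // _; rewrite ?addnS addn0 ?w4 ?w3 ?w2 ?w1; lra.
- case=> [|[|[|[|l]]]] // _; rewrite ?addnS addn0 ?e3 ?e2 ?e1 ?e0.
  + exact: ok_C0.
  + exact: ok_lit.
  + exact: ok_retC.
  + exact: ok_ret0.
Qed.

Lemma div_loop y k st : ch y -> ch (lneg y) -> pc sigma k = XC st [::] (En (MLit y)) ->
  forall t, exists st', pc sigma (k + t.*2) = XC st' [::] (En (MLit y)) /\
     pw (k + t.*2) = (pw k - (t.*2)%:Z)%R.
Proof.
move=> cy cny e0; elim=> [|t [st' [e1 w1]]].
  by exists st; rewrite double0 addn0 subr0.
have [e2 w2] := adv e1 (nx_litT _ cy).
have [e3 w3] := adv e2 (nx_litT _ cny).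
rewrite lnegK in e3.
exists ((BL (lneg y), [:: SNode (En (MLit (lneg y)))])
           :: (BL y, [:: SNode (En (MLit y))]) :: st').
rewrite doubleS !addnS; split=> //.
rewrite w3 w2 w1. lia.
Qed.

Lemma div_run k i h0 : pc sigma k = C0 i h0 -> div i ->
  (forall l, pw (k + l.+1) = (pw k - l%:Z)%R) /\ (forall l, okc (pc sigma (k + l))).
Proof.
rewrite /div => e0 /andP[cy cny].
have [e1 w1] := adv e0 (nx_C0 i _).
have L := div_loop cy cny e1.
have E l : (k + l.+1 = k.+1 + l)%N by rewrite addnS.
split=> l.
- rewrite E; have [t [l2|l2]] : exists t, l = t.*2 \/ l = (t.*2).+1.
    by exists l./2; have := odd_double_half l; case: (odd l) => /= Eo; [right|left]; rewrite -{1}Eo ?add0n.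
  + have [st' [_ w]] := L t; by rewrite l2 w w1; ring.
  + have [st' [e w]] := L t.
    have [_ w'] := adv e (nx_litT _ cy).
    by rewrite l2 addnS w' w w1 -addn1 PoszD; ring.
- case: l => [|l]; first by rewrite addn0 e0; exact: ok_C0.
  rewrite E; have [t [l2|l2]] : exists t, l = t.*2 \/ l = (t.*2).+1.
    by exists l./2; have := odd_double_half l; case: (odd l) => /= Eo; [right|left]; rewrite -{1}Eo ?add0n.
  + have [st' [e _]] := L t; rewrite l2 e; exact: ok_lit.
  + have [st' [e w]] := L t.
    have [e' _] := adv e (nx_litT _ cy).
    rewrite l2 addnS e'; exact: ok_lit.
Qed.


Lemma ndiv_cases i : ~~ div i -> good i \/ neg1 i.
Proof. rewrite /div /good /neg1; case: (ch _); case: (ch _); auto. Qed.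

Lemma adv_clause k i h0 : pc sigma k = C0 i h0 -> ~~ div i ->
  exists d h0', [/\ (0 < d <= 6)%N, pc sigma (k + d) = C0 (nextcl i) h0',
     (neg1 i -> pw (k + d) = (pw k - 1)%R),
     (forall l, (l <= d)%N -> (pw (k + l) <= pw k)%R) &
     (forall l, (l < d)%N -> okc (pc sigma (k + l)))].
Proof.
move=> e0 /ndiv_cases [g|ng].
- have [[h' e] w b o] := good_run e0 g.
  exists 6%N, h'; split=> //.
  + by move: g; rewrite /good /neg1 => /andP[-> _].
  + by move=> l /b /andP[].
- have [[h' e] w b o] := neg1_run e0 ng.
  by exists 4%N, h'; split.
Qed.

Lemma upto (P : nat -> Prop) a d : (forall k, (k <= a)%N -> P k) ->
  (forall l, (l <= d)%N -> P (a + l)%N) -> forall k, (k <= a + d)%N -> P k.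
Proof.
move=> H1 H2 k kle; case: (leqP k a) => [/H1 //| lt].
have -> : k = (a + (k - a))%N by rewrite subnKC // ltnW.
apply: H2; lia.
Qed.

Lemma upto_lt (P : nat -> Prop) a d : (forall k, (k < a)%N -> P k) ->
  (forall l, (l < d)%N -> P (a + l)%N) -> forall k, (k < a + d)%N -> P k.
Proof.
move=> H1 H2 k kle; case: (ltnP k a) => [/H1 //| lt].
have -> : k = (a + (k - a))%N by rewrite subnKC.
apply: H2; lia.
Qed.

Lemma pw0 : pw 0 = 0%R.
Proof. by rewrite /prefix_weight big_ord0. Qed.

Lemma start (i00 : 'I_mm) : nat_of_ord i00 = 0%N ->
  pc sigma 1 = C0 i00 [:: SNode (En M0)] /\ pw 1 = 0%R.
Proof.
move=> h; have [e w] := @adv 0 (init_conf G) _ _ _ erefl (nx_init h).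
by rewrite e w pw0 addr0.
Qed.


Lemma val_nextcl (i : 'I_mm) : nat_of_ord (nextcl i) = (i.+1 %% mm)%N.
Proof. by []. Qed.

Lemma walk (i00 : 'I_mm) : nat_of_ord i00 = 0%N -> forall p, (p < mm)%N ->
  (forall q : 'I_mm, (q < p)%N -> ~~ div q) ->
  exists kp h (ip : 'I_mm), [/\ nat_of_ord ip = p, pc sigma kp = C0 ip h,
    (forall k, (k <= kp)%N -> (pw k <= 0)%R) & (forall k, (k < kp)%N -> okc (pc sigma k))].
Proof.
move=> h00; elim=> [|p IH] plt nd.
  have [e w] := start h00.
  exists 1%N, [:: SNode (En M0)], i00; split=> //.
  + by case=> [|[|k]] //; rewrite ?pw0 ?w.
  + by case=> [|k] // _; exact: (ok_init h00).
have [kp [h [ip [vp e b o]]]] := IH (ltnW plt) (fun q qp => nd q (ltnW qp)).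
have ndp : ~~ div ip by apply: nd; rewrite vp.
have [d [h' [dlt e' _ b' o']]] := adv_clause e ndp.
exists (kp + d)%N, h', (nextcl ip); split=> //.
- by rewrite val_nextcl vp modn_small.
- apply: upto => // l /b' hl; apply: le_trans hl _; exact: b.
- apply: upto_lt => // l /o' //.
Qed.

Lemma fwd : (forall c tw, consistent_play sigma c tw -> liminfavg_nonneg tw) ->
  forall i, good i.
Proof.
move=> win; apply/forallP; apply/negPn/negP; rewrite negb_forall => /existsP [i0 ngi0].
have mm0 : (0 < mm)%N by apply: leq_ltn_trans (leq0n i0) (ltn_ord i0).
pose i00 : 'I_mm := Ordinal mm0.
have h00 : nat_of_ord i00 = 0%N by [].
have own : forall s, @owner1 G s by [].
case: (boolP [exists i, div i]) => [/existsP [i1 di1] | nd].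
- have ex : exists p, [exists q : 'I_mm, (nat_of_ord q == p) && div q].
    by exists (nat_of_ord i1); apply/existsP; exists i1; rewrite eqxx.
  case: (ex_minnP ex) => p /existsP [q /andP [/eqP qp dq]] pmin.
  have pm : (p < mm)%N by rewrite -qp ltn_ord.
  have nd' : forall q' : 'I_mm, (q' < p)%N -> ~~ div q'.
    move=> q' q'p; apply/negP => dq'.
    have := pmin q' ltac:(by apply/existsP; exists q'; rewrite eqxx dq'); lia.
  have [kp [h [ip [vp e b o]]]] := walk h00 pm nd'.
  have ipE : ip = q by apply: val_inj; rewrite /= vp qp.
  rewrite ipE in e.
  have dp := dq.
  have [w o'] := div_run e dp.
  have okall : forall k, okc (pc sigma k).
    move=> k; case: (ltnP k kp) => [/o //|kk].
    have -> : k = (kp + (k - kp))%N by rewrite subnKC.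
    exact: o'.
  have cp := play_exists leg own okall.
  apply: (@not_liminf G (ptw sigma) 1 kp.+1) (win _ _ cp) => // k.
  rewrite mulr1; case: (leqP k kp) => [kk|kk].
    have := b k kk; lia.
  have -> : k = (kp + (k - kp).-1.+1)%N by rewrite prednK ?subn_gt0 // subnKC // ltnW.
  rewrite w; have := b kp (leqnn _); lia.
- have ndall : forall i, ~~ div i by move=> i; apply/negP => di; case/existsP: nd; exists i.
  have ng0 : neg1 i0.
    by case: (ndiv_cases (ndall i0)) => // g; rewrite g in ngi0.
  pose M := (6 * mm)%N.
  have inv : forall r, exists kr h (i : 'I_mm), [/\ pc sigma kr = C0 i h, (r <= kr)%N,
     (M%:Z * pw kr + kr%:Z <= 1 + 6 * (nat_of_ord i)%:Z - (if (i0 < i)%N then M%:Z else 0))%R,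
     (forall k, (k <= kr)%N -> (M%:Z * pw k + k%:Z <= 7 + M%:Z)%R) &
     (forall k, (k < kr)%N -> okc (pc sigma k))].
    elim=> [|r [kr [h [i [e rk inv b o]]]]].
      have [e w] := start h00.
      exists 1%N, [:: SNode (En M0)], i00; split=> //.
      + by rewrite w h00 /=; lia.
      + by case=> [|[|k]] // _; rewrite ?pw0 ?w; lia.
      + by case=> [|k] // _; exact: (ok_init h00).
    have [d [h' [dlt e' n1 b' o']]] := adv_clause e (ndall i).
    exists (kr + d)%N, h', (nextcl i); split=> //.
    + lia.
    + have hd := b' d (leqnn d).
      have hM : (M%:Z * pw (kr + d) <= M%:Z * pw kr)%R by rewrite ler_wpM2l.
      rewrite val_nextcl.
      have i1 := ltn_ord i; have i01 := ltn_ord i0.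
      case: (eqVneq i i0) => [ei|nei].
        have w : pw (kr + d) = (pw kr - 1)%R by apply: n1; rewrite ei.
        rewrite w mulrBr mulr1 in hM *.
        subst i.
        case: (ltnP i0.+1 mm) => hl.
          rewrite modn_small // ltnSn; rewrite ltnn in inv; rewrite /M in inv *; lia.
        have -> : (i0.+1 = mm)%N by lia.
        rewrite modnn leqNgt mm0 /=; rewrite ltnn in inv; rewrite /M in inv *; lia.
      have nei' : (nat_of_ord i != nat_of_ord i0) by [].
      case: (ltnP i.+1 mm) => hl.
        rewrite modn_small //.
        have -> : (i0 < i.+1)%N = (i0 < i)%N by move: nei'; case: ltngtP => //; lia.
        move: inv; case: (i0 < i)%N; rewrite /M; lia.
      have ei : (i.+1 = mm)%N by lia.
      rewrite ei modnn ltn0.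
      have ii : (i0 < i)%N by move: nei'; lia. rewrite ii in inv.
      move: inv; rewrite /M; lia.
    + apply: upto => // l ld; have hl := b' l ld.
      have hM : (M%:Z * pw (kr + l) <= M%:Z * pw kr)%R by rewrite ler_wpM2l.
      have := ltn_ord i; move: inv dlt; case: (i0 < i)%N; rewrite /M; lia.
    + by apply: upto_lt => // l /o'.
  have okall : forall k, okc (pc sigma k).
    by move=> k; have [kr [h [i [_ rk _ _ o]]]] := inv k.+1; apply: o.
  have cp := play_exists leg own okall.
  apply: (@not_liminf G (ptw sigma) M (7 + M) ltac:(by rewrite /M; lia)) (win _ _ cp) => k.
  have [kr [h [i [_ rk _ b _]]]] := inv k.
  have := b k rk; rewrite /M; lia.
Qed.

End Phi.

Section Bwd.
Variables (n : nat) (phi : cnf3 n) (a : 'I_n -> bool).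
Local Notation mm := (size phi).
Local Notation G := (A_phi phi).
Local Notation SRC := (src (anode n mm) (abox n mm)).

Definition choose_a (s : SRC) : tgt (anode n mm) (abox n mm) * int :=
  match s with
  | SNode (En M0) => if [pick i : 'I_mm | nat_of_ord i == 0%N] is Some i
                     then (TCall (B0 i) (En (MCl i)), 0%R) else (TNode (En M0), 0%R)
  | SNode (En (MCl i)) =>
      let j := odflt ord0 [pick j : 'I_3 | lit_true a (clause_lit i j)] in
      (TCall (BC i j) (En (MLit (clause_lit i j))), 0%R)
  | SNode (En (MLit y)) => if lit_true a y then (TCall (BL y) (En (MLit (lneg y))), (-1)%R)
                           else (TNode (Ex (MLit y)), (-1)%R)
  | SNode (Ex _) => (TNode (En M0), 0%R)
  | SRet (B0 i) _ => (TCall (B0 (nextcl i)) (En (MCl (nextcl i))), 0%R)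
  | SRet (BC i j) _ => (TNode (Ex (MCl i)), 0%R)
  | SRet (BL y) _ => (TNode (Ex (MLit y)), 2%R)
  end.

Definition sig_a : mstrategy G := fun M hs => choose_a (last (SNode (En M0)) hs).

Lemma leg_a : legal sig_a.
Proof.
move=> M h s _ [t [w e]]; rewrite /sig_a last_rcons.
case: e => /=.
- move=> i i0; case: pickP => [i' /eqP hi' | /(_ i)]; first exact: e0_start.
  by rewrite i0 eqxx.
- by move=> i j hj; apply: e0_next.
- by move=> i j; apply: ecl_call.
- by move=> i j; apply: ecl_ret.
- by move=> y; case: (lit_true a y); [apply: elit_true | apply: elit_false].
- by move=> y; case: (lit_true a y); [apply: elit_true | apply: elit_false].
- by move=> y; apply: elit_ret.
Qed.

Lemma ch_a z : ch sig_a z = lit_true a z.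
Proof. by rewrite /ch /sig_a /=; case: (lit_true a z). Qed.

Lemma lit_lneg y : lit_true a (lneg y) = ~~ lit_true a y.
Proof. by rewrite /lit_true /lneg /=; case: (a _); case: (y.2). Qed.

Lemma good_a (sat : forall cl, cl \in phi -> exists j : 'I_3, lit_true a (tnth cl j)) i :
  good sig_a i.
Proof.
have lt : lit_true a (clause_lit i (jof sig_a i)).
  rewrite /jof /sig_a /=.
  case: pickP => [j //|none].
  have [j hj] := sat _ (mem_tnth i (in_tuple phi)).
  by have := none j; rewrite /clause_lit hj.
by rewrite /good !ch_a lit_lneg lt.
Qed.

End Bwd.

Lemma bwd_win n (phi : cnf3 n) (a : 'I_n -> bool)
  (sat : forall cl, cl \in phi -> exists j : 'I_3, lit_true a (tnth cl j)) :
  winning_modular (@sig_a n phi a).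
Proof.
have leg := @leg_a n phi a.
split=> // c tw cp.
have own : forall s, @owner1 (A_phi phi) s by [].
have mm0 : (0 < size phi)%N.
  have := cp.2 0%N; rewrite cp.1 /step /=; case=> E _ _.
  by inversion E; apply: leq_ltn_trans (leq0n i) (ltn_ord i).
pose i00 : 'I_(size phi) := Ordinal mm0.
have h00 : nat_of_ord i00 = 0%N by [].
have g := good_a sat.
have inv : forall r, exists (i : 'I_(size phi)) h, pc (@sig_a n phi a) (1 + 6 * r) = @XConf (A_phi phi) [:: (B0 i, h)] [::] (En (MCl i))
    /\ prefix_weight (ptw (@sig_a n phi a)) (1 + 6 * r) = 0%R.
  elim=> [|r [i [h [e w]]]].
    by have [e w] := start leg h00; exists i00, [:: SNode (En M0)]; rewrite muln0 addn0.
  have [[h' e'] w' _ _] := good_run leg e (g i).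
  exists (nextcl i), h'.
  have -> : (1 + 6 * r.+1 = 1 + 6 * r + 6)%N by lia.
  by rewrite e' w' w.
have lb : forall k, (- (2%:Z) <= prefix_weight (ptw (@sig_a n phi a)) k)%R.
  case=> [|k]; first by rewrite pw0.
  have [i [h [e w]]] := inv (k %/ 6)%N.
  have [_ _ b _] := good_run leg e (g i).
  have kE : k.+1 = (1 + 6 * (k %/ 6) + k %% 6)%N.
    by rewrite (divn_eq k 6) mulnC addnC; lia.
  rewrite kE; have := b (k %% 6)%N; rewrite w => /(_ ltac:(by apply: ltnW; rewrite ltn_mod)).
  by case/andP.
apply: (@liminf_of_lb _ _ 2) => k.
have <- : prefix_weight (ptw (@sig_a n phi a)) k = prefix_weight tw k.
  rewrite /prefix_weight; apply: eq_bigr => i _.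
  by have [_ ->] := play_unique own cp i.
exact: lb.
Qed.

Unset Implicit Arguments.
Theorem lemma12 (n : nat) (phi : cnf3 n)
  (H3 : forall cl, cl \in phi -> uniq cl) :
  has_modular_winning_strategy (A_phi phi) <-> satisfiable phi.
Proof.
split.
- move=> [sigma [leg win]].
  exists (fun k => ch sigma (k, true)) => cl clin.
  have : cl \in in_tuple phi by [].
  case/tnthP => i ->.
  have /andP [cy cny] := fwd leg win i.
  exists (jof sigma i).
  rewrite -[tnth (tnth _ i) _]/(clause_lit i (jof sigma i)).
  move: cy cny; case: (clause_lit i (jof sigma i)) => k [] /= cy cny; rewrite /lit_true /=.
  + by rewrite cy.
  + by move: cny; rewrite /lneg /= => /negbTE ->.
- move=> [a sat]; exists (@sig_a n phi a); exact: bwd_win.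
Qed.
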